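(* Every equidistributed infinite permutation is aperiodic, i.e. not ultimately periodic.
   Context: An infinite permutation is an equivalence class of sequences $(a[n])_{n\ge0}$ of pairwise distinct reals, where two sequences are equivalent if $a[i]<a[j]\iff b[i]<b[j]$ for all $i,j$; write $\alpha=(\alpha[n])_{n\ge0}$ with the induced order. A sequence $(a[n])$ in $[0,1]$ is equidistributed if $\lim_{n\to\infty}\frac{\#\{0\le i<n:a[i]<t\}}{n}=t$ for each $t\in[0,1]$; a permutation is equidistributed if it has an equidistributed representative in $[0,1]$. A permutation $\alpha$ is ultimately $t$-periodic ($t\ge1$) if for all sufficiently large $i,j$, $\alpha[i]<\alpha[j]\iff\alpha[i+t]<\alpha[j+t]$; it is ultimately periodic if it is ultimately $t$-periodic for some $t$. *)

(* Defs.v *)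
From Stdlib Require Import Reals.
Open Scope R_scope.

(* A sequence of pairwise distinct reals (a representative of an infinite permutation). *)
Definition distinct_seq (a : nat -> R) : Prop :=
  forall i j : nat, i <> j -> a i <> a j.

(* Two sequences represent the same infinite permutation. *)
Definition order_equiv (a b : nat -> R) : Prop :=
  forall i j : nat, a i < a j <-> b i < b j.

Fixpoint count_below (b : nat -> R) (t : R) (n : nat) : nat :=
  match n with
  | O => O
  | S m => (if Rlt_dec (b m) t then 1 else 0) + count_below b t m
  end%nat.

Definition equidistributed_seq (b : nat -> R) : Prop :=
  (forall n, 0 <= b n <= 1) /\
  forall t : R, 0 <= t <= 1 ->
    Un_cv (fun n => INR (count_below b t n) / INR n) t.

Definition equidistributed_perm (a : nat -> R) : Prop :=
  exists b : nat -> R, distinct_seq b /\ order_equiv a b /\ equidistributed_seq b.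

Definition ult_t_periodic (a : nat -> R) (t : nat) : Prop :=
  exists N : nat, forall i j : nat, (N <= i)%nat -> (N <= j)%nat ->
    (a i < a j <-> a (i + t)%nat < a (j + t)%nat).

Definition ult_periodic (a : nat -> R) : Prop :=
  exists t : nat, (1 <= t)%nat /\ ult_t_periodic a t.

(* Main.v *)
Require Import Defs.
From Stdlib Require Import Reals Lra Lia Psatz Classical.
Open Scope R_scope.

Definition ind (b : nat -> R) (s : R) (i : nat) : nat :=
  if Rlt_dec (b i) s then 1%nat else 0%nat.

Fixpoint win (b : nat -> R) (s : R) (n d : nat) : nat :=
  match d with
  | O => O
  | S d' => (ind b s (n + d') + win b s n d')%nat
  end.

Lemma count_add b s n d : count_below b s (n + d) = (win b s n d + count_below b s n)%nat.
Proof.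
  induction d as [|d IH]; simpl.
  - now rewrite Nat.add_0_r.
  - rewrite Nat.add_succ_r. simpl. rewrite IH. unfold ind. lia.
Qed.

Lemma win_shift b s t N' n d :
  (forall i, (N' <= i)%nat -> ind b s (i + t) = ind b s i) -> (N' <= n)%nat ->
  win b s (n + t) d = win b s n d.
Proof.
  intros H Hn. induction d as [|d IH]; simpl; auto.
  rewrite IH. replace (n + t + d)%nat with (n + d + t)%nat by lia.
  rewrite H by lia. reflexivity.
Qed.

Lemma count_lin b s t N' :
  (forall i, (N' <= i)%nat -> ind b s (i + t) = ind b s i) ->
  forall k, count_below b s (N' + k * t) = (count_below b s N' + k * win b s N' t)%nat.
Proof.
  intros H k. induction k as [|k IH].
  - simpl. now rewrite Nat.add_0_r.
  - replace (N' + S k * t)%nat with (N' + k * t + t)%nat by lia.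
    rewrite count_add, IH.
    assert (W : forall k, win b s (N' + k * t) t = win b s N' t).
    { induction k0 as [|k0 IHk]. simpl. now rewrite Nat.add_0_r.
      replace (N' + S k0 * t)%nat with (N' + k0 * t + t)%nat by lia.
      rewrite win_shift with (N' := N'); auto; lia. }
    rewrite W. lia.
Qed.

Lemma incr_mono (f : nat -> R) : (forall k, f k < f (S k)) ->
  forall k d, f k <= f (k + d)%nat.
Proof.
  intros H k d. induction d as [|d IH].
  - rewrite Nat.add_0_r; lra.
  - rewrite Nat.add_succ_r. specialize (H (k + d)%nat). lra.
Qed.

Lemma ev_const (f : nat -> R) (s : R) :
  (forall k, f k < f (S k)) \/ (forall k, f (S k) < f k) ->
  exists M, forall k, (M <= k)%nat -> (f k < s <-> f (S k) < s).
Proof.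
  intros [H|H].
  - destruct (classic (exists k0, f k0 >= s)) as [[k0 Hk0]|Hn].
    + exists k0. intros k Hk. pose proof (incr_mono f H k0 (k - k0)).
      replace (k0 + (k - k0))%nat with k in H0 by lia. specialize (H k). split; lra.
    + exists 0%nat. intros k _. split; intros _; apply Rnot_ge_lt; intro; apply Hn; eauto.
  - set (g := fun k => - f k).
    assert (Hg : forall k, g k < g (S k)) by (intro k; unfold g; specialize (H k); lra).
    destruct (classic (exists k0, f k0 < s)) as [[k0 Hk0]|Hn].
    + exists k0. intros k Hk. pose proof (incr_mono g Hg k0 (k - k0)).
      replace (k0 + (k - k0))%nat with k in H0 by lia. unfold g in H0. specialize (H k). split; lra.
    + exists 0%nat. intros k _. split; intros Hc; exfalso; apply Hn; eauto.
Qed.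

Theorem corollary1 (a : nat -> R) :
  distinct_seq a -> equidistributed_perm a -> ~ ult_periodic a.
Proof.
  intros Hda [b [Hdb [Heq [Hbnd Hcv]]]] [t [Ht [N HN]]].
  assert (Pb : forall i j, (N <= i)%nat -> (N <= j)%nat ->
             (b i < b j <-> b (i + t)%nat < b (j + t)%nat)).
  { intros i j Hi Hj. rewrite <- (Heq i j), <- (Heq (i+t)%nat (j+t)%nat). apply HN; auto. }
  assert (Htr : (1 <= INR t)) by (apply (le_INR 1); lia).
  set (s := 1 / (2 * INR t)).
  assert (Mono : forall i0, (N <= i0)%nat ->
     (forall k, b (i0 + k * t)%nat < b (i0 + S k * t)%nat) \/
     (forall k, b (i0 + S k * t)%nat < b (i0 + k * t)%nat)).
  { intros i0 Hi0.
    assert (Hne : b i0 <> b (i0 + t)%nat) by (apply Hdb; lia).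
    destruct (Rtotal_order (b i0) (b (i0 + t)%nat)) as [Hl|[He|Hl]]; [left| contradiction |right];
      intro k; induction k as [|k IH].
    - simpl. rewrite !Nat.add_0_r. exact Hl.
    - assert (E1 : (i0 + S k * t = i0 + k * t + t)%nat) by lia.
      assert (E2 : (i0 + S (S k) * t = i0 + S k * t + t)%nat) by lia.
      rewrite E2, E1. apply (proj1 (Pb (i0 + k*t)%nat (i0+k*t+t)%nat ltac:(lia) ltac:(lia))). rewrite <- E1. exact IH.
    - simpl. rewrite !Nat.add_0_r. exact Hl.
    - assert (E1 : (i0 + S k * t = i0 + k * t + t)%nat) by lia.
      assert (E2 : (i0 + S (S k) * t = i0 + S k * t + t)%nat) by lia.
      rewrite E2, E1. apply (proj1 (Pb (i0 + k*t+t)%nat (i0+k*t)%nat ltac:(lia) ltac:(lia))). rewrite <- E1. exact IH. }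
  assert (Stab : forall c, exists M, forall j, (j < c)%nat -> forall k, (M <= k)%nat ->
            (b (N + j + k * t)%nat < s <-> b (N + j + S k * t)%nat < s)).
  { induction c as [|c [M IH]].
    - exists 0%nat. intros; lia.
    - destruct (ev_const (fun k => b (N + c + k * t)%nat) s (Mono (N + c)%nat ltac:(lia))) as [M2 H2].
      exists (Nat.max M M2). intros j Hj k Hk.
      destruct (Nat.eq_dec j c) as [->|Hjc].
      + apply H2; lia.
      + apply IH; lia. }
  destruct (Stab t) as [M HM].
  set (N' := (N + M * t)%nat).
  assert (Pind : forall i, (N' <= i)%nat -> ind b s (i + t) = ind b s i).
  { intros i Hi.
    assert (Htn : t <> 0%nat) by lia.
    pose proof (Nat.div_mod (i - N) t Htn) as Hdm.
    pose proof (Nat.mod_upper_bound (i - N) t Htn) as Hmu.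
    set (j := ((i - N) mod t)%nat) in *. set (k := ((i - N) / t)%nat) in *.
    assert (Hk : (M <= k)%nat).
    { unfold k. rewrite <- (Nat.div_mul M t Htn). apply Nat.div_le_mono; auto. unfold N' in Hi. lia. }
    specialize (HM j Hmu k Hk).
    replace i with (N + j + k * t)%nat by lia.
    replace (N + j + k * t + t)%nat with (N + j + S k * t)%nat by lia.
    unfold ind. destruct (Rlt_dec _ s), (Rlt_dec _ s); tauto. }
  pose proof (count_lin b s t N' Pind) as CL.
  set (C := count_below b s N') in *. set (m := win b s N' t) in *.
  assert (Hs : 0 <= s <= 1).
  { unfold s. split. apply Rlt_le, Rdiv_lt_0_compat; lra.
    apply Rmult_le_reg_r with (2 * INR t); [lra|]. unfold Rdiv. rewrite Rmult_assoc, Rinv_l by lra. lra. }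
  destruct (Hcv s Hs (1 / (4 * INR t))) as [n0 Hn0].
  { apply Rdiv_lt_0_compat; lra. }
  set (k := (n0 + 4 * t * C + 3 * N' + 1)%nat).
  set (n := (N' + k * t)%nat).
  assert (Hnn0 : (n >= n0)%nat) by (unfold n, k; nia).
  specialize (Hn0 n Hnn0). unfold R_dist in Hn0. cbv beta in Hn0. unfold n in Hn0 at 1. rewrite CL in Hn0. fold n in Hn0.
  assert (Hnpos : (0 < n)%nat) by (unfold n, k; nia).
  set (cnt := (C + k * m)%nat) in *.
  assert (Hnr : 0 < INR n) by (apply lt_0_INR; lia).
  apply Rabs_def2 in Hn0. destruct Hn0 as [Hu Hl].
  set (q := INR cnt / INR n) in *.
  assert (Hx : INR cnt = q * INR n) by (unfold q; field; lra).
  assert (Hq1 : 1 < 4 * INR t * q).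
  { assert (E : 4 * INR t * (s - 1 / (4 * INR t)) = 1) by (unfold s; field; lra). nra. }
  assert (Hq2 : 4 * INR t * q < 3).
  { assert (E : 4 * INR t * (s + 1 / (4 * INR t)) = 3) by (unfold s; field; lra). nra. }
  assert (R1 : INR n < 4 * INR t * INR cnt) by (rewrite Hx; nra).
  assert (R2 : 4 * INR t * INR cnt < 3 * INR n) by (rewrite Hx; nra).
  replace (4 * INR t * INR cnt) with (INR (4 * t * cnt)) in R1, R2
    by (rewrite !mult_INR; simpl; ring).
  replace (3 * INR n) with (INR (3 * n)) in R2 by (rewrite mult_INR; simpl; ring).
  apply INR_lt in R1. apply INR_lt in R2.
  unfold cnt, n in *.
  destruct m as [|m'].
  - assert (k >= 4 * t * C)%nat by (unfold k; lia).
    nia.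
  - assert (k >= 3 * N')%nat by (unfold k; lia).
    nia.
Qed.
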